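(* Let $\beta>0$ be a constant such that for every connected $P_7$-free graph $G'$ on at least two vertices, every potential maximal clique $\Omega'$ of $G'$ and every probability measure $\mu'$ on $\Omega'$, there is a vertex $v\in V(G')$ with $\mu'(N(v)\cap\Omega')\ge\beta$. Then for every $P_7$-free graph $G$, every potential maximal clique $\Omega$ of $G$, and every efficient dominating set $X$ of $G$, we have $|\Omega\cap X|\le 1/\beta$.
   Context: All graphs are finite, simple and undirected. $P_k$ is the path on $k$ vertices; a graph is $P_k$-free if it has no induced subgraph isomorphic to $P_k$. $N(v)$ is the open neighbourhood. A triangulation of $G$ is a set $F$ of non-edges such that $(V(G),E(G)\cup F)$ is chordal; it is minimal if no proper subset is a triangulation. A potential maximal clique of $G$ is a maximal clique of $(V(G),E(G)\cup F)$ for some minimal triangulation $F$. An efficient dominating set of $G$ is a set $X$ with $|N[v]\cap X|=1$ for every vertex $v$, where $N[v]$ is the closed neighbourhood. (A constant $\beta$ with the stated property exists.) *)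

(* Defs.v *)
From HB Require Import structures.
From mathcomp Require Import all_boot all_order all_algebra.
From mathcomp Require Export reals.
Set Implicit Arguments. Unset Strict Implicit. Unset Printing Implicit Defensive.
Import Order.TTheory GRing.Theory Num.Theory.

Definition simple_graph (T : finType) (e : rel T) : Prop :=
  symmetric e /\ irreflexive e.

Definition induced_path (T : finType) (e : rel T) (k : nat) (f : 'I_k -> T) : Prop :=
  injective f /\
  forall i j : 'I_k, e (f i) (f j) = ((val i).+1 == val j) || ((val j).+1 == val i).

Definition Pk_free (k : nat) (T : finType) (e : rel T) : Prop :=
  forall f : 'I_k -> T, ~ induced_path e f.

Definition induced_cycle (T : finType) (e : rel T) (k : nat) (f : 'I_k -> T) : Prop :=
  injective f /\
  forall i j : 'I_k,
    e (f i) (f j) = (val j == (val i).+1 %% k) || (val i == (val j).+1 %% k).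

Definition chordal (T : finType) (e : rel T) : Prop :=
  forall k, 4 <= k -> forall f : 'I_k -> T, ~ induced_cycle e f.

Definition connected (T : finType) (e : rel T) : Prop :=
  forall x y : T, connect e x y.

Definition add_edges (T : finType) (e : rel T) (F : {set T * T}) : rel T :=
  fun x y => e x y || ((x, y) \in F).

(* F is a set of non-edges (stored symmetrically: both orientations of each
   added unordered pair) whose addition yields a chordal graph. *)
Definition triangulation (T : finType) (e : rel T) (F : {set T * T}) : Prop :=
  [/\ forall x y, ((x, y) \in F) = ((y, x) \in F),
      forall x y, (x, y) \in F -> x != y /\ ~~ e x y
    & chordal (add_edges e F)].

Definition minimal_triangulation (T : finType) (e : rel T) (F : {set T * T}) : Prop :=
  triangulation e F /\
  forall F' : {set T * T}, triangulation e F' -> F' \subset F -> F' = F.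

Definition clique (T : finType) (e : rel T) (K : {set T}) : Prop :=
  forall x y, x \in K -> y \in K -> x != y -> e x y.

Definition maximal_clique (T : finType) (e : rel T) (K : {set T}) : Prop :=
  clique e K /\ forall K' : {set T}, clique e K' -> K \subset K' -> K' = K.

Definition potential_maximal_clique (T : finType) (e : rel T) (Om : {set T}) : Prop :=
  exists F : {set T * T}, minimal_triangulation e F /\ maximal_clique (add_edges e F) Om.

Definition nbhd (T : finType) (e : rel T) (v : T) : {set T} := [set u | e v u].
Definition cnbhd (T : finType) (e : rel T) (v : T) : {set T} := v |: nbhd e v.

Definition efficient_dominating_set (T : finType) (e : rel T) (X : {set T}) : Prop :=
  forall v : T, #|cnbhd e v :&: X| = 1%N.

(* A probability measure on the finite set Om, given by point masses mu x (x in Om);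
   values of mu outside Om are irrelevant. *)
Definition prob_measure_on (R : realType) (T : finType) (Om : {set T}) (mu : T -> R) : Prop :=
  (forall x, x \in Om -> 0 <= mu x)%R /\ (\sum_(x in Om) mu x = 1)%R.

Definition measure_of (R : realType) (T : finType) (mu : T -> R) (A : {set T}) : R :=
  (\sum_(x in A) mu x)%R.

(* Main.v *)
Require Import Defs.
From mathcomp Require Import all_boot all_order all_algebra reals.
From mathcomp Require Import lra.
Import Order.TTheory GRing.Theory Num.Theory.
Local Open Scope ring_scope.

Lemma icycle_map (T1 T2 : finType) (H1 : rel T1) (H2 : rel T2) k
  (f : 'I_k -> T1) (f2 : 'I_k -> T2) :
  (forall i j, f2 i = f2 j -> f i = f j) ->
  (forall i j, H2 (f2 i) (f2 j) = H1 (f i) (f j)) ->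
  induced_cycle H1 f -> induced_cycle H2 f2.
Proof.
move=> hi he [fi fe]; split; first by move=> i j /hi /fi.
by move=> i j; rewrite he fe.
Qed.

Lemma ipath_map (T1 T2 : finType) (H1 : rel T1) (H2 : rel T2) k
  (f : 'I_k -> T1) (f2 : 'I_k -> T2) :
  (forall i j, f2 i = f2 j -> f i = f j) ->
  (forall i j, H2 (f2 i) (f2 j) = H1 (f i) (f j)) ->
  induced_path H1 f -> induced_path H2 f2.
Proof.
move=> hi he [fi fe]; split; first by move=> i j /hi /fi.
by move=> i j; rewrite he fe.
Qed.

Lemma chordal_split (T : finType) (H : rel T) (C : {set T}) :
  (forall x y, H x y -> (x \in C) = (y \in C)) ->
  (forall k (f : 'I_k -> T), (4 <= k)%N -> induced_cycle H f ->
      (forall i, f i \in C) -> False) ->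
  (forall k (f : 'I_k -> T), (4 <= k)%N -> induced_cycle H f ->
      (forall i, f i \notin C) -> False) ->
  chordal H.
Proof.
move=> hC hin hout k hk f hf.
have k0 : (0 < k)%N by apply: leq_trans hk.
have side : forall n (hn : (n < k)%N), (f (Ordinal hn) \in C) = (f (Ordinal k0) \in C).
  elim=> [|n IH] hn; first by congr (f _ \in C); apply: val_inj.
  have hn' : (n < k)%N by apply: ltnW.
  rewrite -(IH hn'); symmetry; apply: hC.
  by rewrite hf.2 /= modn_small // eqxx.
case hc: (f (Ordinal k0) \in C).
- apply: (hin k f hk hf) => i.
  have e : Ordinal (ltn_ord i) = i by apply: val_inj.
  by rewrite -e side hc.
- apply: (hout k f hk hf) => i.
  have e : Ordinal (ltn_ord i) = i by apply: val_inj.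
  by rewrite -e side hc.
Qed.
Lemma bool_inst (R : realType) (beta : R)
  (Hbeta : forall (T' : finType) (e' : rel T'),
      simple_graph e' -> connected e' -> Pk_free 7 e' -> (1 < #|T'|)%N ->
      forall (Om' : {set T'}), potential_maximal_clique e' Om' ->
      forall mu' : T' -> R, prob_measure_on Om' mu' ->
      exists v : T', beta <= measure_of mu' (nbhd e' v :&: Om')) :
  beta <= 1.
Proof.
pose e' := fun x y : bool => x != y.
have noinj : forall k (f : 'I_k -> bool), (4 <= k)%N -> injective f -> False.
  move=> k f hk /leq_card; rewrite card_ord card_bool => h.
  by have := leq_trans hk h.
have hch : chordal (add_edges e' set0).
  by move=> k hk f [fi _]; apply: (noinj k f hk fi).
have h1 : simple_graph e'.
  split; first by move=> x y; rewrite /e' eq_sym.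
  by move=> x; rewrite /e' eqxx.
have h2 : connected e'.
  move=> x y; case: (eqVneq x y) => [->|hxy]; first exact: connect0.
  by apply: connect1.
have h3 : Pk_free 7 e'.
  by move=> f [fi _]; apply: (noinj 7 f isT fi).
have h4 : potential_maximal_clique e' [set: bool].
  exists set0; split.
  + split.
      split => //; first by move=> x y; rewrite !inE.
      by move=> x y; rewrite inE.
    by move=> F' _ hs; apply/eqP; rewrite eqEsubset hs sub0set.
  + split; first by move=> x y _ _ hxy; rewrite /add_edges /e' hxy.
    by move=> K' _ hs; apply/eqP; rewrite eqEsubset subsetT.
have h6 : (1 < #|{: bool}|)%N by rewrite card_bool.
have h5 : prob_measure_on [set: bool] (fun _ : bool => (2^-1 : R)).
  split => //; first by move=> *; rewrite invr_ge0.
  rewrite sumr_const cardsT card_bool mulr2n; lra.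
have [v hv] := Hbeta bool e' h1 h2 h3 h6 _ h4 _ h5.
apply: le_trans hv _.
rewrite /measure_of sumr_const.
have : (#|[pred x in nbhd e' v :&: [set: bool]]| <= 2)%N.
  by rewrite -[in X in (_ <= X)%N]card_bool max_card.
have a1 : (2^-1:R) *+ 2 <= 1 by rewrite mulr2n; lra.
have a2 : (2^-1:R) <= 1 by lra.
case: #|_| => [|[|[|n]]] // _.
Qed.

Theorem lemma3 (R : realType) (beta : R) (hbeta : 0 < beta)
  (Hbeta : forall (T' : finType) (e' : rel T'),
      simple_graph e' -> connected e' -> Pk_free 7 e' -> (1 < #|T'|)%N ->
      forall (Om' : {set T'}), potential_maximal_clique e' Om' ->
      forall mu' : T' -> R, prob_measure_on Om' mu' ->
      exists v : T', beta <= measure_of mu' (nbhd e' v :&: Om'))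
  (T : finType) (e : rel T) (hG : simple_graph e) (hP7 : Pk_free 7 e)
  (Om : {set T}) (hOm : potential_maximal_clique e Om)
  (X : {set T}) (hX : efficient_dominating_set e X) :
  (#|Om :&: X|)%:R <= beta^-1.
Proof.
have b1 := @bool_inst R beta Hbeta.
set k := #|Om :&: X|.
case: (leqP k 1) => hk.
  apply: (@le_trans _ _ 1); first by rewrite lern1.
  by rewrite invf_ge1.
have [x0 hx0] : exists x0, x0 \in Om :&: X.
  by apply/set0Pn; rewrite -card_gt0; exact: ltnW.
move: (hx0); rewrite inE => /andP[x0Om x0X].
case: hG => esym eirr.
pose C := [set y | connect e x0 y].
have x0C : x0 \in C by rewrite inE connect0.
have hCe : forall x y, e x y -> (x \in C) = (y \in C).
  move=> x y exy; rewrite !inE; apply/idP/idP => h.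
  - exact: connect_trans h (connect1 exy).
  - by apply: connect_trans h (connect1 _); rewrite esym.
have Cdef : forall y, (y \in C) = connect e x0 y by move=> y; rewrite inE.
clearbody C.
case: hOm => F [[[hsym hne hch] hFmin] [hcl hmax]].
pose F0 := [set p in F | (p.1 \in C) == (p.2 \in C)].
have F0F : F0 = F.
  apply: hFmin; last by apply/subsetP => p; rewrite inE => /andP[].
  split.
  - by move=> x y; rewrite !inE /= hsym eq_sym.
  - by move=> x y; rewrite inE => /andP[/hne].
  - apply: (chordal_split _ _ C).
    + move=> x y; rewrite /add_edges => /orP[/hCe //|].
      by rewrite inE => /andP[_ /eqP].
    + move=> k' f hk' hf hin; apply: (hch k' hk' f).
      apply: (icycle_map _ _ _ _ _ f f _ _ hf) => // i j.
      by rewrite /add_edges inE /= !hin eqxx andbT.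
    + move=> k' f hk' hf hout; apply: (hch k' hk' f).
      apply: (icycle_map _ _ _ _ _ f f _ _ hf) => // i j.
      by rewrite /add_edges inE /= !(negbTE (hout _)) eqxx andbT.
have hnocross : forall x y, (x, y) \in F -> (x \in C) = (y \in C).
  by move=> x y; rewrite -F0F inE => /andP[_ /eqP].
have hOmC : forall x, x \in Om -> x \in C.
  move=> x xOm; case: (eqVneq x x0) => [->//|hx].
  have hx1 : x0 != x by rewrite eq_sym.
  have := hcl x0 x x0Om xOm hx1.
  by rewrite /add_edges => /orP[/hCe|/hnocross] <-.
pose T' := {y : T | y \in C}.
pose x0' : T' := exist _ x0 x0C.
pose proj := fun x => insubd x0' x : T'.
have val_proj : forall x, x \in C -> val (proj x) = x.
  by move=> x h; apply: insubdK.
have proj_val : forall a : T', proj (val a) = a by move=> a; apply: valKd.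
have valC : forall a : T', val a \in C by move=> a; apply: (valP a).
pose e' := fun a b : T' => e (val a) (val b).
pose F' := [set p : T' * T' | (val p.1, val p.2) \in F].
pose Om' := [set a : T' | val a \in Om].
have addE : forall a b, add_edges e' F' a b = add_edges e F (val a) (val b).
  by move=> a b; rewrite /add_edges inE.
pose mu' := fun a : T' => if val a \in X then (k%:R)^-1 else 0 : R.
have kpos : (0 : R) < k%:R by rewrite ltr0n; apply: ltnW.
have sumE : forall A : {set T'},
    \sum_(a in A) mu' a = (k%:R)^-1 *+ #|[set a in A | val a \in X]|.
  move=> A; rewrite -sumr_const big_mkcond [RHS]big_mkcond /=.
  apply: eq_bigr => a _; rewrite !inE /mu'.
  by case: (a \in A); case: (val a \in X).
have cardS : #|[set a in Om' | val a \in X]| = k.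
  rewrite -(card_imset _ val_inj); apply: eq_card => x; rewrite inE.
  apply/imsetP/andP.
  - by case=> a; rewrite !inE => /andP[aOm aX] ->; split.
  - case=> xOm xX; exists (proj x); last by rewrite val_proj ?hOmC.
    by rewrite !inE val_proj ?hOmC // xOm xX.
have h1 : simple_graph e'.
  by split; [move=> a b; exact: esym | move=> a; exact: eirr].
have h2 : connected e'.
  have fromx0 : forall p x, x \in C -> path e x p ->
      connect e' (proj x) (proj (last x p)).
    elim=> [|z p IH] x xC /=; first by move=> _; exact: connect0.
    case/andP=> exz pz.
    have zC : z \in C by rewrite -(hCe _ _ exz).
    apply: connect_trans (IH z zC pz); apply: connect1.
    by rewrite /e' !val_proj.
  have symc : connect_sym e'.
    by apply: sym_connect_sym => a b; exact: esym.
  have c0 : forall b, connect e' x0' b.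
    move=> b; have := valC b; rewrite Cdef => /connectP[p hp hl].
    have := fromx0 p x0 x0C hp; rewrite -hl proj_val.
    have -> // : proj x0 = x0' by apply: val_inj; rewrite val_proj.
  by move=> a b; apply: connect_trans (c0 b); rewrite symc.
have h3 : Pk_free 7 e'.
  move=> f hf; apply: (hP7 (fun i => val (f i))).
  by apply: (ipath_map _ _ _ _ _ f _ _ _ hf) => // i j; apply: val_inj.
have h4 : (1 < #|{: T'}|)%N.
  by apply: (leq_trans hk); rewrite -cardS; exact: max_card.
have h5 : potential_maximal_clique e' Om'.
  exists F'; split; [split|].
  - split.
    + by move=> a b; rewrite !inE /= hsym.
    + move=> a b; rewrite inE /= => /hne [hab hnab]; split => //.
    + move=> k' hk' f hf; apply: (hch k' hk' (fun i => val (f i))).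
      apply: (icycle_map _ _ _ _ _ f _ _ _ hf) => i j; first by move/val_inj.
      by rewrite addE.
  - move=> F'' [hsym'' hne'' hch''] hsub.
    pose F3 := [set p in F | p.1 \notin C] :|:
      [set p : T * T | [&& p.1 \in C, p.2 \in C & (proj p.1, proj p.2) \in F'']].
    have F3F : F3 = F.
      apply: hFmin.
      + split.
        * move=> x y; rewrite !inE /=.
          case: (boolP (x \in C)) => xC; case: (boolP (y \in C)) => yC /=.
          -- by rewrite !andbF hsym''.
          -- rewrite andbF andbT !orbF /=; symmetry; apply/negbTE/negP => /hnocross.
             by rewrite xC (negbTE yC).
          -- rewrite andbF andbT !orbF /=; apply/negbTE/negP => /hnocross.
             by rewrite yC (negbTE xC).
          -- by rewrite hsym.
        * move=> x y; rewrite !inE /= => /orP[/andP[/hne //]|/and3P[xC yC hp]].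
          have [hne1 hne2] := hne'' _ _ hp; split.
          -- by apply: contraNneq hne1 => ->.
          -- by move: hne2; rewrite /e' !val_proj.
        * apply: (chordal_split _ _ C).
          -- move=> x y; rewrite /add_edges => /orP[/hCe//|].
             rewrite !inE /= => /orP[/andP[/hnocross//]| /and3P[-> -> _]//].
          -- move=> k' f hk' hf hin.
             apply: (hch'' k' hk' (fun i => proj (f i))).
             apply: (icycle_map _ _ _ _ _ f _ _ _ hf) => i j.
             ++ by move=> h; rewrite -(val_proj _ (hin i)) h val_proj.
             ++ rewrite /add_edges /e' !val_proj // !inE /= !hin /=.
                by rewrite andbF.
          -- move=> k' f hk' hf hout; apply: (hch k' hk' f).
             apply: (icycle_map _ _ _ _ _ f f _ _ hf) => // i j.
             rewrite /add_edges !inE /= !(negbTE (hout _)) /=.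
             by rewrite andbT orbF.
      + apply/subsetP => -[x y]; rewrite !inE /= => /orP[/andP[]//|/and3P[xC yC hp]].
        by have := subsetP hsub _ hp; rewrite inE /= !val_proj.
    apply/eqP; rewrite eqEsubset hsub /=; apply/subsetP => -[a b].
    rewrite inE /= -F3F !inE /= !valC /= andbF /=.
    by rewrite !proj_val.
  split.
  - move=> a b; rewrite !inE => aO bO hab; rewrite addE.
    by apply: hcl => //; apply: contraNneq hab => /val_inj.
  - move=> K' hK' hs.
    have KOm : val @: K' = Om.
      apply: hmax.
      + move=> x y /imsetP[a aK ->] /imsetP[b bK ->] hxy; rewrite -addE.
        by apply: hK' => //; apply: contraNneq hxy => ->.
      + apply/subsetP => x xOm; apply/imsetP; exists (proj x).
        * by apply: (subsetP hs); rewrite inE val_proj ?hOmC.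
        * by rewrite val_proj ?hOmC.
    apply/eqP; rewrite eqEsubset hs andbT; apply/subsetP => a aK.
    by rewrite inE -KOm; apply/imsetP; exists a.
have h6 : prob_measure_on Om' mu'.
  split.
  - move=> a _; rewrite /mu'; case: ifP => _ //.
    by rewrite invr_ge0 ler0n.
  - rewrite sumE cardS -(mulr_natr (k%:R)^-1) mulVf //.
    by rewrite gt_eqF.
have [v hv] := Hbeta _ e' h1 h2 h3 h4 Om' h5 mu' h6.
move: hv; rewrite /measure_of sumE.
have cle : (#|[set a in nbhd e' v :&: Om' | val a \in X]| <= 1)%N.
  rewrite -(hX (val v)) -(card_imset _ val_inj); apply: subset_leq_card.
  apply/subsetP => x /imsetP[a]; rewrite !inE => /andP[/andP[eva _] aX] ->.
  by rewrite aX andbT; apply/orP; right.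
move: cle; case: #|_| => [|[|n]] // _ hv.
- by rewrite mulr0n in hv; have := lt_le_trans hbeta hv; rewrite ltxx.
- rewrite mulr1n in hv.
  by rewrite -[k%:R]invrK lef_pV2 ?posrE ?invr_gt0.
Qed.
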